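(* Fix an integer $\overline{m}\geq 1$, put $m=2\overline{m}$, and let $G_2=(\{1,2\},A,1,2)$ be the doubly-rooted digraph with roots $s=1$, $t=2$ and edges $a_1,\dots,a_{m+3}$, where (writing $a_x=(i,j)$ for $a_x^-=i$, $a_x^+=j$) $a_{2\ell-1}=(1,2)$, $a_{2\ell}=(2,1)$ for $\ell=1,\dots,\overline{m}$, $a_{m+1}=(1,1)$, $a_{m+2}=(1,2)$, $a_{m+3}=(2,2)$. Let $B=\{a_1,\dots,a_m\}$. Then, with respect to the enumeration $(a_1,\dots,a_{m+3})$, $S(G_2,B)=\big((\overline{m}+1)!\big)^2$.
   Context: For a doubly-rooted digraph $G=(V,A,s,t)$ (each edge $a$ has source $a^-$, target $a^+$; loops and multiple edges allowed) with enumeration $A=\{a_1,\dots,a_k\}$ and $B\subseteq A$: $M(B)=\{j\in[k]:a_j\in B\}$; $P(G)=\{\sigma\in\mathfrak{S}_k: a_{\sigma(1)}^-=s,\ a_{\sigma(k)}^+=t,\ a_{\sigma(j+1)}^-=a_{\sigma(j)}^+\ \forall j\in[k-1]\}$; for $M=\{j_1<\dots<j_\ell\}\subseteq[k]$, $\sigma_M\in\mathfrak{S}_\ell$ is $\sigma_M(g)=|\{h\in[\ell]:\sigma(j_h)\le\sigma(j_g)\}|$; $S(G,B)=\sum_{\sigma\in P(G)}\mathrm{sgn}(\sigma)\mathrm{sgn}(\sigma_{M(B)})$. *)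

(* Defs.v *)
From mathcomp Require Import all_boot all_order all_algebra all_fingroup.
Set Implicit Arguments. Unset Strict Implicit. Unset Printing Implicit Defensive.
Import GRing.Theory.
Local Open Scope ring_scope.

(* A doubly-rooted digraph with vertex type V and edges a_0, ..., a_(k-1)
   (0-indexed version of a_1..a_k), given by source/target maps
   src (= a^-) and tgt (= a^+) and roots s, t. *)

Definition sgn n (p : 'S_n) : int := (-1) ^+ (odd_perm p).

(* P(G): permutations sigma of the edge indices (position j |-> edge index
   sigma j) forming an Eulerian trail from s to t. *)
Definition in_P (V : eqType) k (src tgt : 'I_k -> V) (s t : V) (sigma : 'S_k) : bool :=
  [&& [forall j : 'I_k, (val j == 0)%N ==> (src (sigma j) == s)],
      [forall j : 'I_k, (val j == k.-1)%N ==> (tgt (sigma j) == t)] &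
      [forall j : 'I_k, forall j' : 'I_k,
          (val j == (val j').+1)%N ==> (src (sigma j) == tgt (sigma j'))]].

(* sigma_M for M = {j_1 < ... < j_l} (enumerated increasingly by enum_val):
   sigma_M(g) = #{h : pos(j_h) <= pos(j_g)} (here shifted to 0-indexed),
   where pos = sigma^-1 gives the position of an edge in the trail
   (the literal reading with sigma is inconsistent).
   We pick the permutation of 'I_#|M| equal to this function
   (it always is a permutation since sigma is injective). *)
Definition restr_fun k (sigma : 'S_k) (M : {set 'I_k}) (g : 'I_#|M|) : nat :=
  (#|[set h : 'I_#|M| | ((sigma^-1)%g (enum_val h) <= (sigma^-1)%g (enum_val g))%N]|).-1.

Definition restr_perm_M k (sigma : 'S_k) (M : {set 'I_k}) : 'S_#|M| :=
  odflt 1%g [pick p : 'S_#|M| | [forall g, val (p g) == restr_fun sigma g]].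

Definition S_GB (V : eqType) k (src tgt : 'I_k -> V) (s t : V) (M : {set 'I_k}) : int :=
  \sum_(sigma : 'S_k | in_P src tgt s t sigma) sgn sigma * sgn (restr_perm_M sigma M).

(* The digraph G_2 for mb = \overline{m}, m = 2 mb, with k = m + 3 edges,
   0-indexed: edge x corresponds to a_(x+1). Vertices are 1 and 2 (nat). *)
Definition G2_src (mb : nat) (x : 'I_(2 * mb + 3)) : nat :=
  if (val x < 2 * mb)%N then (if odd x then 2%N else 1%N)
  else if (val x == 2 * mb)%N then 1%N
  else if (val x == (2 * mb).+1)%N then 1%N
  else 2%N.

Definition G2_tgt (mb : nat) (x : 'I_(2 * mb + 3)) : nat :=
  if (val x < 2 * mb)%N then (if odd x then 1%N else 2%N)
  else if (val x == 2 * mb)%N then 1%N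
  else if (val x == (2 * mb).+1)%N then 2%N
  else 2%N.

Definition G2_M (mb : nat) : {set 'I_(2 * mb + 3)} := [set x | (val x < 2 * mb)%N].
Arguments G2_src : clear implicits.
Arguments G2_tgt : clear implicits.
Arguments G2_M : clear implicits.

(* Main.v *)
Require Import Defs.
From mathcomp Require Import all_boot all_order all_algebra all_fingroup.
From mathcomp Require Import zify ring.
Set Implicit Arguments. Unset Strict Implicit. Unset Printing Implicit Defensive.
Import Order.TTheory GRing.Theory Num.Theory.
Local Open Scope ring_scope.
Lemma sgn_inv n (s : 'S_n) :
  sgn s = (-1) ^+ (\sum_(i < n) \sum_(j < n | (i < j)%N) (s j < s i)%N)%N.
Proof.
pose a : 'rV[int]_n := \row_j ((j : nat)%:Z).
pose b : 'rV[int]_n := \row_j ((s j : nat)%:Z).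
have H2 : col_perm s (Vandermonde n a) = Vandermonde n b.
  by apply/matrixP => i j; rewrite !mxE.
have H1 : \det (Vandermonde n b) = (-1) ^+ s * \det (Vandermonde n a).
  by rewrite -H2 col_permE det_mulmx det_perm odd_permV mulrC.
rewrite !det_Vandermonde in H1.
have := congr1 Num.sg H1.
rewrite sgrM (big_morph Num.sg (@sgrM _) (@sgr1 _)).
rewrite [X in _ = _ * X](big_morph Num.sg (@sgrM _) (@sgr1 _)).
rewrite [X in _ = _ * X]big1; last first.
  move=> i _; rewrite (big_morph Num.sg (@sgrM _) (@sgr1 _)) big1 // => j ij.
  by rewrite !mxE gtr0_sg // subr_gt0 ltz_nat.
rewrite /sgn mulr1 sgrX sgrN1 => <-.
rewrite -prodrXr; apply: eq_bigr => i _.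
rewrite (big_morph Num.sg (@sgrM _) (@sgr1 _)) -prodrXr; apply: eq_bigr => j ij.
rewrite !mxE.
have ne : (s j : nat) != s i.
  by apply/eqP => /val_inj /perm_inj E; move: ij; rewrite E ltnn.
case: ltngtP ne => // h _.
  by rewrite ltr0_sg // subr_lt0 ltz_nat.
by rewrite gtr0_sg // subr_gt0 ltz_nat.
Qed.

Section Restr.
Variables (k m : nat) (Hm : (m <= k)%N).
Let M := [set x : 'I_k | (x < m)%N].

Lemma map_val_enumM : map val (enum M) = iota 0 m.
Proof.
have -> : enum M = [seq x <- enum 'I_k | x \in M] by rewrite {1}/enum_mem -enumT.
rewrite (@eq_filter _ _ (preim val (fun n => (n < m)%N))); last by move=> x; rewrite inE.
rewrite -filter_map val_enum_ord -(subnKC Hm) iotaD filter_cat.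
rewrite (@eq_in_filter _ _ predT) ?filter_predT; last first.
  by move=> x; rewrite mem_iota /= add0n.
rewrite (@eq_in_filter _ _ pred0) ?filter_pred0 ?cats0 //.
move=> x; rewrite mem_iota /= add0n => /andP[h _].
by rewrite /preim /= ltnNge h.
Qed.

Lemma cardM : #|M| = m.
Proof. by rewrite cardE -(size_map val) map_val_enumM size_iota. Qed.

Lemma ev_val (g : 'I_#|M|) : val (enum_val g) = val g.
Proof.
have gm : (g < m)%N by rewrite -cardM ltn_ord.
rewrite (enum_val_nth (enum_val g)) -(nth_map (enum_val g) 0%N val); last first.
  by rewrite -cardE ltn_ord.
by rewrite map_val_enumM nth_iota.
Qed.

Variable sigma : 'S_k.
Let pos := (sigma^-1)%g.

Lemma rf_lt (g h : 'I_#|M|) : (pos (enum_val g) < pos (enum_val h))%N ->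
  (restr_fun sigma g < restr_fun sigma h)%N.
Proof.
move=> gh; rewrite /restr_fun.
set A := [set _ | _]; set B := [set _ | _].
have AB : A \proper B.
  apply/properP; split.
    apply/subsetP => x; rewrite !inE => xg; exact: leq_trans xg (ltnW gh).
  by exists h; rewrite !inE ?leqnn // leqNgt gh.
have := proper_card AB.
have : (0 < #|A|)%N by apply/card_gt0P; exists g; rewrite inE.
lia.
Qed.

Lemma rf_bound (g : 'I_#|M|) : (restr_fun sigma g < #|M|)%N.
Proof.
rewrite /restr_fun; set A := [set _ | _].
have : (0 < #|A|)%N by apply/card_gt0P; exists g; rewrite inE.
have := max_card A; rewrite card_ord => h1 h2; by rewrite -ltnS prednK.
Qed.

Lemma rf_inj : injective (fun g => Ordinal (rf_bound g)).
Proof.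
move=> g h /(congr1 val) /= E.
case: (ltngtP (pos (enum_val g)) (pos (enum_val h))) => c.
- by have := rf_lt c; rewrite E ltnn.
- by have := rf_lt c; rewrite E ltnn.
- by apply: enum_val_inj; apply: (@perm_inj _ pos); apply: val_inj.
Qed.

Definition rp : 'S_#|M| := perm rf_inj.

Lemma restr_eq : restr_perm_M sigma M = rp.
Proof.
rewrite /restr_perm_M; case: pickP => [q /forallP Hq | H] /=.
  by apply/permP => g; apply/val_inj; rewrite permE /=; exact: (eqP (Hq g)).
have := H rp; rewrite (_ : [forall g, _] = true) //.
by apply/forallP => g; rewrite permE.
Qed.

Lemma rp_lt (g h : 'I_#|M|) : (rp g < rp h)%N = (pos (enum_val g) < pos (enum_val h))%N.
Proof.
rewrite /rp !(permE rf_inj) /=.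
case: (ltngtP (pos (enum_val g)) (pos (enum_val h))) => c.
- by rewrite (rf_lt c).
- by apply/negbTE; rewrite -leqNgt; apply: ltnW; exact: rf_lt c.
- have : g = h by apply: enum_val_inj; apply: (@perm_inj _ pos); apply: val_inj.
  by move=> ->; rewrite ltnn.
Qed.

Lemma sum_cond (I : finType) (P b : pred I) :
  (\sum_(j | P j) (b j : nat) = \sum_j (P j && b j : nat))%N.
Proof. by rewrite big_mkcond; apply: eq_bigr => j _; case: (P j). Qed.

Lemma sgn_restr : sgn (restr_perm_M sigma M) =
  (-1) ^+ (\sum_(x < k) \sum_(y < k) [&& (x < y)%N, (y < m)%N & (pos y < pos x)%N])%N.
Proof.
rewrite restr_eq sgn_inv; congr (_ ^+ _).
under eq_bigr => i _ do rewrite sum_cond.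
under eq_bigr => i _ do under eq_bigr => j _ do rewrite rp_lt.
rewrite (bigID (fun x => x \in M)) /= [X in (_ + X)%N]big1 ?addn0; last first.
  move=> x; rewrite inE -leqNgt => xm; apply: big1 => y _.
  by case: ltnP => //= xy; rewrite ltnNge (leq_trans xm (ltnW xy)).
rewrite [RHS]big_enum_val; apply: eq_bigr => i _.
rewrite (bigID (fun y => y \in M)) /= [X in (_ + X)%N]big1 ?addn0; last first.
  by move=> y; rewrite inE -leqNgt => ym; rewrite [(y < m)%N]ltnNge ym andbF.
rewrite [RHS]big_enum_val; apply: eq_bigr => j _.
have := enum_valP j; rewrite inE => ->.
by rewrite !ev_val.
Qed.

Lemma sign_prod : sgn sigma * sgn (restr_perm_M sigma M) =
  (-1) ^+ (\sum_(x < k) \sum_(y < k) [&& (x < y)%N, (m <= y)%N & (pos y < pos x)%N])%N.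
Proof.
rewrite sgn_restr.
have -> : sgn sigma = sgn pos by rewrite /sgn /pos odd_permV.
rewrite sgn_inv.
under eq_bigr => i _ do rewrite sum_cond.
rewrite (_ : (\sum_(i < k) \sum_(j < k) ((i < j)%N && (pos j < pos i)%N : nat))%N =
  (\sum_(x < k) \sum_(y < k) [&& (x < y)%N, (y < m)%N & (pos y < pos x)%N] +
   \sum_(x < k) \sum_(y < k) [&& (x < y)%N, (m <= y)%N & (pos y < pos x)%N])%N); last first.
  rewrite -big_split; apply: eq_bigr => i _; rewrite -big_split; apply: eq_bigr => j _.
  by case: (ltnP j m); case: (i < j)%N; case: (pos j < pos i)%N.
by rewrite addnC exprD -mulrA -exprD addnn -mul2n exprM (expr2 (-1)) mulrNN mulr1 expr1n mulr1.
Qed.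
End Restr.

Fixpoint Nrec (m : nat) (s : seq nat) : nat :=
  match s with
  | [::] => 0%N
  | x :: t => ((if (m <= x)%N then count (fun y => (y < x)%N) t else 0) + Nrec m t)%N
  end.

Lemma count_sum_nth (a : pred nat) (t : seq nat) :
  count a t = (\sum_(0 <= j < size t) (a (nth 0%N t j) : nat))%N.
Proof.
rewrite -sum1_count (big_nth 0%N) big_mkcond /=.
by apply: eq_bigr => j _; case: (a _).
Qed.

Lemma Nrec_sum m s : Nrec m s =
  (\sum_(0 <= i < size s) \sum_(0 <= j < size s)
     [&& (i < j)%N, (nth 0%N s j < nth 0%N s i)%N & (m <= nth 0%N s i)%N])%N.
Proof.
elim: s => [|x t IH]; first by rewrite big_geq.
rewrite /= big_nat_recl // big_nat_recl //= add0n IH; congr (_ + _)%N.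
  rewrite count_sum_nth; case: (m <= x)%N; last by rewrite big1 // => j _; rewrite !andbF.
  by apply: eq_bigr => j _; rewrite andbT.
apply: eq_bigr => i _; rewrite big_nat_recl //= add0n.
Qed.

Definition sseq k (sigma : 'S_k) : seq nat := [seq val (sigma i) | i <- enum 'I_k].

Lemma nth_sseq k (sigma : 'S_k) (i : 'I_k) : nth 0%N (sseq sigma) i = val (sigma i).
Proof. by rewrite /sseq (nth_map i) ?size_enum_ord // nth_ord_enum. Qed.

Lemma size_sseq k (sigma : 'S_k) : size (sseq sigma) = k.
Proof. by rewrite size_map size_enum_ord. Qed.

Lemma Nrec_sigma k m (sigma : 'S_k) : Nrec m (sseq sigma) =
  (\sum_(x < k) \sum_(y < k) [&& (x < y)%N, (m <= y)%N & ((sigma^-1)%g y < (sigma^-1)%g x)%N])%N.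
Proof.
rewrite Nrec_sum size_sseq big_mkord.
under eq_bigr => i _ do rewrite big_mkord.
rewrite [RHS](reindex_inj (@perm_inj _ sigma)).
under [RHS]eq_bigr => i _ do rewrite (reindex_inj (@perm_inj _ sigma)).
rewrite [RHS]exchange_big; apply: eq_bigr => i _; apply: eq_bigr => j _.
rewrite !nth_sseq !permK.
by case: (i < j)%N; case: (m <= _)%N; case: (_ < _)%N.
Qed.

Fixpoint walk (src tgt : nat -> nat) (v : nat) (s : seq nat) : bool :=
  match s with
  | [::] => v == 2%N
  | x :: t => (src x == v) && walk src tgt (tgt x) t
  end.

Lemma walkE src tgt v s : (0 < size s)%N ->
  walk src tgt v s = [&& src (nth 0%N s 0) == v, tgt (last 0%N s) == 2%N &
     all (fun j => src (nth 0%N s j.+1) == tgt (nth 0%N s j)) (iota 0 (size s).-1)].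
Proof.
elim: s v => [|x t IH] v // _.
case: t IH => [|y t'] IH; first by rewrite /= andbT.
rewrite (_ : walk src tgt v (x :: y :: t') = (src x == v) && walk src tgt (tgt x) (y :: t')) //.
rewrite IH //=.
rewrite (_ : iota 1 _ = map succn (iota 0 (size t'))); last by rewrite -(iotaDl 1 0).
rewrite all_map /=; congr (_ && _).
by case: (src y == tgt x); case: (tgt (last y t') == 2%N).
Qed.

Lemma in_P_walk k (src tgt : nat -> nat) (sigma : 'S_k) : (0 < k)%N ->
  in_P (fun x : 'I_k => src x) (fun x : 'I_k => tgt x) 1%N 2%N sigma =
  walk src tgt 1 (sseq sigma).
Proof.
move=> k0; rewrite walkE ?size_sseq // /in_P.
congr [&& _, _ & _].
- apply/forallP/idP => [H | H j].
    by have := H (Ordinal k0); rewrite (nth_sseq sigma (Ordinal k0)).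
  apply/implyP => /eqP j0; have -> : j = Ordinal k0 by apply: val_inj.
  by rewrite -(nth_sseq sigma (Ordinal k0)).
- have kl : (k.-1 < k)%N by rewrite prednK.
  rewrite -nth_last size_sseq (nth_sseq sigma (Ordinal kl)).
  apply/forallP/idP => [H | H j].
    by move: (H (Ordinal kl)) => /implyP; apply; rewrite eqxx.
  apply/implyP => /eqP j0; have -> : j = Ordinal kl by apply: val_inj.
  by [].
- apply/forallP/allP => [H j | H j].
    rewrite mem_iota /= => jk.
    have j1 : (j.+1 < k)%N by rewrite -ltn_predRL.
    have j2 : (j < k)%N by apply: ltnW.
    have := H (Ordinal j1); move/forallP => /(_ (Ordinal j2)).
    by rewrite (nth_sseq sigma (Ordinal j1)) (nth_sseq sigma (Ordinal j2)) /= eqxx.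
  apply/forallP => j'; apply/implyP => /eqP jj.
  have : (val j' \in iota 0 k.-1) by rewrite mem_iota /= ltn_predRL -jj ltn_ord.
  move/H; by rewrite -jj !nth_sseq.
Qed.

Lemma sseq_inj k : injective (@sseq k).
Proof.
move=> s t E; apply/permP => i; apply: val_inj.
by rewrite -!nth_sseq E.
Qed.

Lemma sseq_perm k (sigma : 'S_k) : perm_eq (sseq sigma) (iota 0 k).
Proof.
rewrite (_ : sseq sigma = map val (map sigma (enum 'I_k))); last by rewrite -map_comp.
rewrite -val_enum_ord; apply: perm_map.
apply: uniq_perm; first by rewrite map_inj_uniq ?enum_uniq //; apply: perm_inj.
  exact: enum_uniq.
move=> x; rewrite mem_enum; apply/mapP; exists ((sigma^-1)%g x); first by rewrite mem_enum.
by rewrite permKV.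
Qed.

Lemma perm_sseq k (s : seq nat) : perm_eq s (iota 0 k) -> exists sigma : 'S_k, s = sseq sigma.
Proof.
move=> ps.
have us : uniq s by rewrite (perm_uniq ps) iota_uniq.
have sz : size s = k by rewrite (perm_size ps) size_iota.
have lt i : (i < k)%N -> (nth 0%N s i < k)%N.
  move=> ik; have : nth 0%N s i \in iota 0 k by rewrite -(perm_mem ps) mem_nth ?sz.
  by rewrite mem_iota.
pose f := fun i : 'I_k => (insubd i (nth 0%N s i) : 'I_k).
have finj : injective f.
  move=> i j /(congr1 val); rewrite /f /= !val_insubd !lt //.
  move/eqP; rewrite nth_uniq ?sz // => /eqP; exact: val_inj.
exists (perm finj).
rewrite /sseq (eq_map (g := (nth 0%N s) \o val)); last first.
  by move=> i; rewrite permE /f /= val_insubd lt.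
by rewrite map_comp val_enum_ord -sz -/(mkseq _ _) mkseq_nth.
Qed.

Lemma bridge k (F : seq nat -> int) :
  \sum_(sigma : 'S_k) F (sseq sigma) = \sum_(s <- permutations (iota 0 k)) F s.
Proof.
rewrite [RHS](perm_big (map (@sseq k) (enum 'S_k))); last first.
  apply: uniq_perm; first exact: permutations_uniq.
    by rewrite map_inj_uniq ?enum_uniq //; apply: sseq_inj.
  move=> s; rewrite mem_permutations; apply/idP/mapP.
    by move/perm_sseq => [sigma ->]; exists sigma; rewrite ?mem_enum.
  by move=> [sigma _ ->]; apply: sseq_perm.
by rewrite big_map big_enum.
Qed.

Definition f1 (b : nat) (E L L2 : bool) : int :=
  if L then (if E then 1 else -1) * (b.+1)%:R else (if L2 then (b.+1)%:R else 1).
Definition f2 (b : nat) (E L L2 : bool) : int :=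
  if L then (if L2 then 0 else (if E then 1 else -1) * b%:R) else (if L2 then (b.+1)%:R else 1).
Definition Cf1 a b (E L L2 : bool) : int :=
  if (a + E == b.+1)%N then (((a + E)`! * b`!)%N)%:R * f1 b E L L2 else 0.
Definition Cf2 a b (E L L2 : bool) : int :=
  if (a + E == b)%N then (((a + E)`! * b`!)%N)%:R * f2 b E L L2 else 0.

Lemma sgn_dbl b (L : bool) : (-1) ^+ (b + b + L)%N = (if L then -1 else 1) :> int.
Proof. by rewrite -signr_odd !oddD addbb oddb; case: L. Qed.

Lemma sgn_dbl0 b : (-1) ^+ (b + b)%N = 1 :> int.
Proof. by rewrite -signr_odd !oddD addbb. Qed.

Lemma Cf_rec1 a b E L L2 : Cf1 a b E L L2 =
  a%:R * Cf2 a.-1 b E L L2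
  + (if E then (-1) ^+ (a + b + L)%N * Cf2 a b false L L2 else 0)
  + (if L then (-1) ^+ (a + b)%N * Cf1 a b E false L2 else 0).
Proof.
rewrite /Cf1 /Cf2.
case: E.
- rewrite addn1 eqSS addn0.
  have [<-|ne] := eqVneq a b.
  + rewrite sgn_dbl sgn_dbl0.
    case: a => [|a].
      by case: L; case: L2; rewrite /f1 /f2 /=; ring.
    rewrite /= addn1 eqxx !factS !natrM.
    by case: L; case: L2; rewrite /f1 /f2 /=; ring.
  + case: a ne => [|a] ne; first by case: L; rewrite ?mul0r ?mulr0 ?addr0.
    by rewrite /= addn1 (negbTE ne); case: L; rewrite ?mul0r ?mulr0 ?addr0.
- rewrite addn0.
  have [->|ne] := eqVneq a b.+1.
  + rewrite /= addn0 eqxx addSn exprS sgn_dbl0 mulr1 !factS !natrM.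
    by case: L; case: L2; rewrite /f1 /f2 /=; ring.
  + case: a ne => [|a] ne; first by case: L; rewrite ?mul0r ?mulr0 ?addr0.
    by rewrite /= addn0 -eqSS (negbTE ne); case: L; rewrite ?mul0r ?mulr0 ?addr0.
Qed.

Lemma Cf_rec2 a b (E L L2 : bool) : (0 < a + b + E + L + L2)%N -> Cf2 a b E L L2 =
  b%:R * Cf1 a b.-1 E L L2
  + (if L2 then (-1) ^+ (a + b + L + E)%N * Cf2 a b E L false else 0).
Proof.
rewrite /Cf1 /Cf2.
case: b => [|b] pos.
  case: a pos => [|a] pos; case: E pos; case: L; case: L2 => //= pos;
    rewrite /f1 /f2 /= ?addSn /=; ring.
rewrite /= (_ : (a + b.+1 + L + E = (a + E) + b.+1 + L)%N); last by lia.
have [e|ne] := eqVneq (a + E)%N b.+1.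
  rewrite e sgn_dbl !factS !natrM.
  by clear pos; case: E e; case: L; case: L2; rewrite /f1 /f2 /= => _; ring.
by clear pos; case: L2; rewrite ?mulr0 ?addr0.
Qed.

Fixpoint Wf (n v a b : nat) (E L L2 : bool) : int :=
  match n with
  | 0%N => (v == 2%N)%:R
  | n'.+1 =>
    if v == 1%N then
      a%:R * Wf n' 2 a.-1 b E L L2
      + (if E then (-1) ^+ (a + b + L)%N * Wf n' 2 a b false L L2 else 0)
      + (if L then (-1) ^+ (a + b)%N * Wf n' 1 a b E false L2 else 0)
    else if v == 2%N then
      b%:R * Wf n' 1 a b.-1 E L L2
      + (if L2 then (-1) ^+ (a + b + L + E)%N * Wf n' 2 a b E L false else 0)
    else 0
  end.

Definition Cf (v a b : nat) (E L L2 : bool) : int :=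
  if v == 1%N then Cf1 a b E L L2 else if v == 2%N then Cf2 a b E L L2 else 0.

Lemma Wf_closed n : forall v a b (E L L2 : bool), n = (a + b + E + L + L2)%N ->
  Wf n v a b E L L2 = Cf v a b E L L2.
Proof.
elim: n => [|n IH] v a b E L L2 h.
  have a0 : a = 0%N by lia.
  have b0 : b = 0%N by lia.
  subst a b; case: E h; case: L; case: L2 => // _.
  rewrite /Cf /Cf1 /Cf2 /=.
  by case: v => [|[|[|v]]].
case: v => [|[|[|v]]] //.
  rewrite /Cf /= Cf_rec1; congr (_ + _ + _).
  - case: a h => [|a] h; first by rewrite !mul0r.
    by rewrite (IH 2%N) //; lia.
  - by case: E h => // h; rewrite (IH 2%N) //; lia.
  - by case: L h => // h; rewrite (IH 1%N) //; lia.
rewrite /Cf /= Cf_rec2; last by rewrite -h.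
congr (_ + _).
- case: b h => [|b] h; first by rewrite !mul0r.
  by rewrite (IH 1%N) //; lia.
- by case: L2 h => // h; rewrite (IH 2%N) //; lia.
Qed.

Lemma Wf_top mb : Wf (2 * mb + 3) 1 mb mb true true true = ((mb.+1)`! ^ 2)%:R.
Proof.
rewrite Wf_closed; last by rewrite /=; lia.
rewrite /Cf /Cf1 /= addn1 eqxx /f1 /= natrX !factS !natrM.
by ring.
Qed.

Section Rec.
Variable mb : nat.
Let m := (2 * mb)%N.

Definition srcn (x : nat) : nat :=
  if (x < m)%N then (if odd x then 2%N else 1%N)
  else if x == m then 1%N else if x == m.+1 then 1%N else 2%N.
Definition tgtn (x : nat) : nat :=
  if (x < m)%N then (if odd x then 1%N else 2%N)
  else if x == m then 1%N else if x == m.+1 then 2%N else 2%N.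

Definition Fv (v : nat) (s : seq nat) : int :=
  (walk srcn tgtn v s)%:R * (-1) ^+ (Nrec m s).

Definition isu x := (x < m)%N && ~~ odd x.
Definition isd x := (x < m)%N && odd x.

Lemma FvE v x t : Fv v (x :: t) =
  (srcn x == v)%:R * (-1) ^+ (if (m <= x)%N then count (fun y => (y < x)%N) t else 0%N)
  * Fv (tgtn x) t.
Proof.
rewrite /Fv /= exprD; case: (srcn x == v); rewrite /= ?mul0r ?mul1r //.
by rewrite mulrCA.
Qed.

Lemma cnt_lt s : count (fun y => (y < m)%N) s = (count isu s + count isd s)%N.
Proof. by elim: s => //= y s ->; rewrite /isu /isd; case: (y < m)%N; case: (odd y) => /=; lia. Qed.

Lemma cnt_lt1 s : count (fun y => (y < m.+1)%N) s = (count (fun y => (y < m)%N) s + count (pred1 m) s)%N.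
Proof. by elim: s => //= y s ->; rewrite ltnS leq_eqVlt; case: (y =P m) => [->|_]; rewrite ?ltnn /=; lia. Qed.

Lemma cnt_lt2 s : count (fun y => (y < m.+2)%N) s = (count (fun y => (y < m.+1)%N) s + count (pred1 m.+1) s)%N.
Proof. by elim: s => //= y s ->; rewrite (ltnS y m.+1) leq_eqVlt; case: (y =P m.+1) => [->|_]; rewrite ?ltnn /=; lia. Qed.

Lemma sum_ind (r : seq nat) (P : pred nat) (c : int) :
  \sum_(x <- r) (P x)%:R * c = (count P r)%:R * c.
Proof.
elim: r => [|x r IH]; first by rewrite big_nil mul0r.
by rewrite big_cons IH /= natrD mulrDl.
Qed.


Lemma count_rem (P : pred nat) x r : x \in r -> count P (rem x r) = (count P r - P x)%N.
Proof. by move=> xr; rewrite (seq.permP (perm_to_rem xr) P) /= addKn. Qed.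

Lemma Fv_rec n : forall r, size r = n -> uniq r -> all (fun x => (x < m.+3)%N) r -> forall v,
  \sum_(s <- permutations r) Fv v s =
  Wf n v (count isu r) (count isd r) (m.+1 \in r) (m \in r) (m.+2 \in r).
Proof.
elim: n => [|n IH] r.
  move/size0nil => -> _ _ v /=.
  by rewrite big_cons big_nil /Fv /= expr0 mulr1 addr0.
move=> sz ur ar v.
rewrite (perm_big _ (permutationsE _)); last by rewrite sz.
rewrite undup_id // big_allpairs_dep /=.
set a := count isu r; set b := count isd r.
set E := m.+1 \in r; set L := m \in r; set L2 := m.+2 \in r.
have step : {in r, forall x, \sum_(t <- permutations (rem x r)) Fv v (x :: t) =
     (isu x)%:R * ((1%N == v)%:R * Wf n 2 a.-1 b E L L2)
   + (isd x)%:R * ((2%N == v)%:R * Wf n 1 a b.-1 E L L2)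
   + (x == m)%:R * ((1%N == v)%:R * ((-1) ^+ (a + b)%N * Wf n 1 a b E false L2))
   + (x == m.+1)%:R * ((1%N == v)%:R * ((-1) ^+ (a + b + L)%N * Wf n 2 a b false L L2))
   + (x == m.+2)%:R * ((2%N == v)%:R * ((-1) ^+ (a + b + L + E)%N * Wf n 2 a b E L false))}.
  move=> x xr.
  have cx : forall t, t \in permutations (rem x r) ->
      count (fun y => (y < x)%N) t = count (fun y => (y < x)%N) (rem x r).
    by move=> t; rewrite mem_permutations => /seq.permP ->.
  rewrite (eq_big_seq (fun t => (srcn x == v)%:R *
     (-1) ^+ (if (m <= x)%N then count (fun y => (y < x)%N) (rem x r) else 0%N)
     * Fv (tgtn x) t)); last by move=> t ht; rewrite FvE cx.
  rewrite -big_distrr /= IH; first last.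
  - by apply/allP => y /mem_rem; apply: (allP ar).
  - exact: rem_uniq.
  - by rewrite size_rem // sz.
  have mr : forall y, (y \in rem x r) = (y != x) && (y \in r).
    by move=> y; rewrite (mem_rem_uniq x ur).
  rewrite !count_rem // !mr -/a -/b -/E -/L -/L2.
  have := allP ar x xr => /= xk.
  case: (ltnP x m) => xm.
    have e0 : (x == m) = false by rewrite ltn_eqF.
    have e1 : (x == m.+1) = false by rewrite ltn_eqF // leqW.
    have e2 : (x == m.+2) = false by rewrite ltn_eqF // leqW // leqW.
    have f0 : (m != x) = true by rewrite gtn_eqF.
    have f1 : (m.+1 != x) = true by rewrite gtn_eqF // leqW.
    have f2 : (m.+2 != x) = true by rewrite gtn_eqF // leqW // leqW.
    rewrite e0 e1 e2 f0 f1 f2 !andTb expr0 mulr1 /isu /isd xm /srcn /tgtn xm.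
    by case: (odd x); rewrite ?mul0r ?mul1r ?addr0 ?add0r ?subn0 ?subn1.
  have mx : (x < m)%N = false by rewrite ltnNge xm.
  have iu : isu x = false by rewrite /isu mx.
  have id : isd x = false by rewrite /isd mx.
  rewrite iu id (subn0 a) (subn0 b) ltnn subn0 mul0r mul0r addr0 add0r.
  have cm : count (pred1 m) r = L by rewrite count_uniq_mem.
  have cm1 : count (pred1 m.+1) r = E by rewrite count_uniq_mem.
  have n01 : (m == m.+1) = false by rewrite ltn_eqF.
  have n02 : (m == m.+2) = false by rewrite ltn_eqF // leqW.
  have n12 : (m.+1 == m.+2) = false by rewrite ltn_eqF.
  have n10 : (m.+1 == m) = false by rewrite gtn_eqF.
  have n20 : (m.+2 == m) = false by rewrite gtn_eqF // leqW.
  have n21 : (m.+2 == m.+1) = false by rewrite gtn_eqF.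
  have : x = m \/ x = m.+1 \/ x = m.+2.
    move: xk xm; rewrite ltnS leq_eqVlt => /orP [/eqP -> |]; first by auto.
    rewrite ltnS leq_eqVlt => /orP [/eqP -> |]; first by auto.
    rewrite ltnS => a1 a2; left; apply/eqP; by rewrite eqn_leq a1 a2.
  case=> [->|[->|->]].
  - have sm : srcn m = 1%N by rewrite /srcn ltnn eqxx.
    have tm : tgtn m = 1%N by rewrite /tgtn ltnn eqxx.
    rewrite sm tm eqxx n01 n02 n10 n20 cnt_lt -/a -/b andTb andFb mul0r mul0r !addr0 mul1r.
    by rewrite mulrA.
  - have sm : srcn m.+1 = 1%N by rewrite /srcn ltnNge leqnSn n10 eqxx.
    have tm : tgtn m.+1 = 2%N by rewrite /tgtn ltnNge leqnSn n10 eqxx.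
    rewrite sm tm eqxx n01 n12 n10 n21 cnt_lt1 cnt_lt cm -/a -/b andTb andFb mul0r mul0r addr0 add0r mul1r.
    by rewrite mulrA.
  - have sm : srcn m.+2 = 2%N by rewrite /srcn ltnNge (leqW (leqnSn m)) n20 n21.
    have tm : tgtn m.+2 = 2%N by rewrite /tgtn ltnNge (leqW (leqnSn m)) n20 n21.
    rewrite sm tm eqxx n02 n12 n20 n21 cnt_lt2 cnt_lt1 cnt_lt cm cm1 -/a -/b andTb andFb andTb mul0r mul0r addr0 add0r mul1r.
    by rewrite mulrA.
rewrite (eq_big_seq _ step) !big_split /=.
rewrite (sum_ind r isu) (sum_ind r isd) (sum_ind r (pred1 m)) (sum_ind r (pred1 m.+1)) (sum_ind r (pred1 m.+2)).
rewrite !count_uniq_mem // -/a -/b -/E -/L -/L2.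
case: (v =P 1%N) => [->|v1].
  rewrite eqxx (_ : (2 == 1)%N = false) //.
  clear step; rewrite /E /L; by case: (m.+1 \in r); case: (m \in r); rewrite ?mul0r ?mul1r ?mulr0 ?addr0 ?add0r ?mulr1 //; ring.
have -> : (1 == v)%N = false by apply/eqP => h; apply: v1.
case: (v =P 2%N) => [->|v2].
  rewrite eqxx.
  clear step; rewrite /L2; by case: (m.+2 \in r); rewrite ?mul0r ?mul1r ?mulr0 ?addr0 ?add0r ?mulr1 //; ring.
have -> : (2 == v)%N = false by apply/eqP => h; apply: v2.

by rewrite !mul0r !mulr0 !addr0.
Qed.
End Rec.


Lemma count_even n : count (fun x => ~~ odd x) (iota 0 (2 * n)) = n.
Proof.
elim: n => [|n IH] //.
rewrite (_ : (2 * n.+1 = 2 * n + 2)%N); last by lia.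
rewrite iotaD count_cat IH add0n /= oddM /=.
by lia.
Qed.

Lemma count_odd n : count (fun x => odd x) (iota 0 (2 * n)) = n.
Proof.
elim: n => [|n IH] //.
rewrite (_ : (2 * n.+1 = 2 * n + 2)%N); last by lia.
rewrite iotaD count_cat IH add0n /= oddM /=.
by lia.
Qed.

Theorem lemma3p5 (mb : nat) : (1 <= mb)%N ->
  S_GB (G2_src mb) (G2_tgt mb) 1%N 2%N (G2_M mb) = Posz ((mb.+1)`! ^ 2)%N.
Proof.
move=> _.
rewrite /S_GB big_mkcond /=.
have Hm : (2 * mb <= 2 * mb + 3)%N by apply: leq_addr.
rewrite (eq_bigr (fun sigma => Fv mb 1 (sseq sigma))); last first.
  move=> sigma _.
  have -> : in_P (G2_src mb) (G2_tgt mb) 1%N 2%N sigma =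
            walk (srcn mb) (tgtn mb) 1 (sseq sigma) by apply: in_P_walk; rewrite addn3.
  rewrite /Fv Nrec_sigma -(sign_prod Hm sigma).
  by case: (walk _ _ _ _); rewrite ?mul1r ?mul0r.
rewrite bridge (@Fv_rec mb (2 * mb + 3)) ?size_iota ?iota_uniq //; last first.
  by apply/allP => x; rewrite mem_iota add0n addn3.
have cu : count (isu mb) (iota 0 (2 * mb + 3)) = mb.
  rewrite iotaD count_cat add0n (@eq_in_count _ _ pred0 (iota (2 * mb) 3)).
    rewrite count_pred0 addn0 -{3}(count_even mb); apply: eq_in_count => x.
    by rewrite mem_iota add0n /isu => /= ->.
  by move=> x; rewrite mem_iota /isu /= => /andP [h _]; rewrite ltnNge h.
have cd : count (isd mb) (iota 0 (2 * mb + 3)) = mb.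
  rewrite iotaD count_cat add0n (@eq_in_count _ _ pred0 (iota (2 * mb) 3)).
    rewrite count_pred0 addn0 -{3}(count_odd mb); apply: eq_in_count => x.
    by rewrite mem_iota add0n /isd => /= ->.
  by move=> x; rewrite mem_iota /isd /= => /andP [h _]; rewrite ltnNge h.
rewrite cu cd !mem_iota /= add0n.
rewrite (_ : (2 * mb).+1 < 2 * mb + 3 = true)%N; last by lia.
rewrite (_ : (2 * mb) < 2 * mb + 3 = true)%N; last by lia.
rewrite (_ : (2 * mb).+2 < 2 * mb + 3 = true)%N; last by lia.
by rewrite Wf_top natz.
Qed.
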